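(* Let $(N,M,W,C,P,\overline{Q})$ be an MRS-situation and $(N,M,v)$ its MRS-game. Then: (i) $v(R,S)>0$ for all coalitions $\emptyset\ne R\subseteq N$ and $S\subseteq M$; (ii) $v(R,S)+v(F,T)\le v(R\cup F,S\cup T)$ for all $R,F\subseteq N$ and $S,T\subseteq M$ with $R\cap F=\emptyset$ and $S\cap T=\emptyset$; (iii) $v(R,S)\le v(F,T)$ for all $R\subseteq F\subseteq N$ and $S\subseteq T\subseteq M$.
   Context: An MRS-situation $(N,M,W,C,P,\overline{Q})$ consists of a finite set $N$ of retailers and a finite set $M$ of suppliers (distinct agents), and: for each $j\in M$ a unit production cost $c_j:[0,\infty)\to(0,\infty)$, decreasing and continuous with $c_j(q)q$ nondecreasing, and a wholesale price $w_j:[0,\infty)\to(0,\infty)$, nonincreasing and continuous, with $w_j(q)>c_j(q)$ for all $q\ge0$ and $w_j(q)q$ nondecreasing; for each $i\in N$ a selling price $p_i:[0,\infty)\to\mathbb{R}$, nonincreasing and continuous, with $p_i(0)>w_j(0)$ for all $j$, and $q_i^*>0$ with $p_i(q_i^* )=0$; and capacities $\overline{q}_{ij}\in(0,\infty)$. For an order matrix $q=(q_{ij})_{i\in R,j\in M}\ge0$: $q_{Rj}=\sum_{i\in R}q_{ij}$, $q_{iM}=\sum_{j}q_{ij}$, $q_{RS}=\sum_{j\in S}\sum_{i\in R}q_{ij}$, $q_i=(q_{ij})_j$, $q_R=(q_{Rj})_j$; $c_S(x)=\min_{j\in S}c_j(x)$. For $i\in R$: $\Pi_i(q_i,\Psi^S(q_R))=p_i(q_{iM})q_{iM}-\sum_{j\in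 S}c_S(q_{RS})q_{ij}-\sum_{j\in M\setminus S}w_j(q_{Rj})q_{ij}$. $\mathbb{Q}^R=\{q\in\mathbb{R}_+^{R\times M}: q_{iM}\le q_i^*,\ q_{ij}\le\overline{q}_{ij}\}$; $q^{(R,S)}$ is an optimal solution of $\max\{\sum_{i\in R}\Pi_i(q_i,\Psi^S(q_R)):q\in\mathbb{Q}^R\}$. The MRS-game is the TU-game on player set $N\cup M$ where coalition $R\cup S$ ($R\subseteq N$, $S\subseteq M$) has value $v(R,S)=\sum_{i\in R}\Pi_i(q_i^{(R,S)},\Psi^S(q_R^{(R,S)}))$ (the optimal value of that problem), and $v(\emptyset,S)=0$ for all $S\subseteq M$. *)

(* Defs.v *)
From HB Require Import structures.
From mathcomp Require Import all_boot all_order all_algebra.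
From mathcomp Require Import all_classical all_reals all_analysis.
Set Implicit Arguments. Unset Strict Implicit. Unset Printing Implicit Defensive.
Import Order.TTheory GRing.Theory Num.Theory.
Import numFieldNormedType.Exports.
Local Open Scope classical_set_scope.
Local Open Scope ring_scope.

Section MRS.
Variables (R : realType) (I J : finType).
(* I = retailers N, J = suppliers M *)
Variables (c w : J -> R -> R) (p : I -> R -> R) (qstar : I -> R) (qbar : I -> J -> R).

Definition nonneg_reals : set R := [set x | 0 <= x].

Definition MRS_situation : Prop :=
  (forall j, forall x, 0 <= x -> 0 < c j x) /\
      (forall j, forall x y, 0 <= x -> x < y -> c j y < c j x) /\
      (forall j, {within nonneg_reals, continuous (c j)}) /\
      (forall j, forall x y, 0 <= x -> x <= y -> c j x * x <= c j y * y) /\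
      (forall j, forall x, 0 <= x -> 0 < w j x) /\
      (forall j, forall x y, 0 <= x -> x <= y -> w j y <= w j x) /\
      (forall j, {within nonneg_reals, continuous (w j)}) /\
      (forall j, forall x, 0 <= x -> c j x < w j x) /\
   (forall j, forall x y, 0 <= x -> x <= y -> w j x * x <= w j y * y) /\
       (forall i, forall x y, 0 <= x -> x <= y -> p i y <= p i x) /\
       (forall i, {within nonneg_reals, continuous (p i)}) /\
       (forall i j, w j 0 < p i 0) /\
       (forall i, 0 < qstar i /\ p i (qstar i) = 0) /\
       (forall i j, 0 < qbar i j).

(* order matrices: q i j = quantity ordered by retailer i from supplier j *)
Definition q_Rj (Rc : {set I}) (q : I -> J -> R) (j : J) : R := \sum_(i in Rc) q i j.
Definition q_iM (q : I -> J -> R) (i : I) : R := \sum_j q i j.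
Definition q_RS (Rc : {set I}) (S : {set J}) (q : I -> J -> R) : R :=
  \sum_(j in S) q_Rj Rc q j.

(* c_S(x) = min_{j in S} c_j(x)  (irrelevant, set to 0, when S is empty) *)
Definition c_S (S : {set J}) (x : R) : R :=
  if [pick j in S] is Some j0 then \big[Order.min/c j0 x]_(j in S) c j x else 0.

Definition Pi (Rc : {set I}) (S : {set J}) (q : I -> J -> R) (i : I) : R :=
  p i (q_iM q i) * q_iM q i
  - \sum_(j in S) c_S S (q_RS Rc S q) * q i j
  - \sum_(j in ~: S) w j (q_Rj Rc q j) * q i j.

Definition objective (Rc : {set I}) (S : {set J}) (q : I -> J -> R) : R :=
  \sum_(i in Rc) Pi Rc S q i.

Definition feasible (Rc : {set I}) (q : I -> J -> R) : Prop :=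
  (forall i j, i \notin Rc -> q i j = 0) /\
  (forall i, i \in Rc -> q_iM q i <= qstar i /\
     forall j, 0 <= q i j /\ q i j <= qbar i j).

Definition mrs_value (Rc : {set I}) (S : {set J}) : R :=
  if Rc == finset.set0 then 0
  else sup [set x | exists q, feasible Rc q /\ x = objective Rc S q].

End MRS.

(* Main.v *)
Require Import Defs.
From HB Require Import structures.
From mathcomp Require Import all_boot all_order all_algebra.
From mathcomp Require Import all_classical all_reals all_analysis.
Import Order.TTheory GRing.Theory Num.Theory.
Import numFieldNormedType.Exports.
Set Implicit Arguments. Unset Strict Implicit. Unset Printing Implicit Defensive.
Local Open Scope ring_scope.

Lemma cS_le_j (R : realType) (J : finType) (c : J -> R -> R) (S : {set J}) (x : R) (j : J) :
  j \in S -> c_S c S x <= c j x.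
Proof.
move=> jS; rewrite /c_S; case: pickP => [j0 _|/(_ j)]; last by rewrite jS.
exact: bigmin_le_cond.
Qed.

Lemma cS_ge0 (R : realType) (J : finType) (c : J -> R -> R) (S : {set J}) (x : R) :
  (forall j, 0 <= c j x) -> 0 <= c_S c S x.
Proof.
move=> h; rewrite /c_S; case: pickP => [j0 _|//].
by apply/bigmin_geP; split.
Qed.

Lemma cS_mono (R : realType) (J : finType) (c : J -> R -> R) (S S' : {set J}) (x X : R) :
  (forall j x y, 0 <= x -> x <= y -> c j y <= c j x) ->
  S \subset S' -> 0 <= x -> x <= X ->
  {in S, forall j, c_S c S' X <= c_S c S x}.
Proof.
move=> anti sub x0 xX j jS.
have key : forall i, i \in S -> c_S c S' X <= c i x.
  move=> i iS; have h1 := @cS_le_j _ _ c S' X i (fintype.subsetP sub _ iS). apply: le_trans h1 _.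
  exact: anti.
rewrite {2}/c_S; case: pickP => [j0 j0S|/(_ j)]; last by rewrite jS.
by apply/bigmin_geP; split; [exact: key|move=> i; exact: key].
Qed.

Lemma sum_subset_le (R : realType) (T : finType) (A B : {set T}) (f : T -> R) :
  A \subset B -> (forall i, i \in B -> 0 <= f i) ->
  \sum_(i in A) f i <= \sum_(i in B) f i.
Proof.
move=> AB h; rewrite [X in _ <= X](big_setID A) /= (finset.setIidPr AB) lerDl.
by apply: sumr_ge0 => i; rewrite inE => /andP[_ /h].
Qed.

Lemma cost_split (R : realType) (J : finType) (S : {set J}) (a : R) (b u : J -> R) :
  \sum_(j in S) a * u j + \sum_(j in ~: S) b j * u j =
  \sum_j (if j \in S then a else b j) * u j.
Proof.
rewrite [RHS](bigID (fun j => j \in S)) /=; congr (_ + _).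
  by apply: eq_big => // j ->.
apply: eq_big => [j|j]; rewrite ?inE //. by move=> /negbTE ->.
Qed.

Lemma Pi_mono (R : realType) (I J : finType) (c w : J -> R -> R) (p : I -> R -> R)
  (Rc Rc' : {set I}) (S S' : {set J}) (q q' : I -> J -> R) (i : I) :
 (forall j x y, 0 <= x -> x <= y -> c j y <= c j x) ->
 (forall j x, 0 <= x -> c j x < w j x) ->
 (forall j x y, 0 <= x -> x <= y -> w j y <= w j x) ->
 S \subset S' ->
 (forall j, q i j = q' i j) ->
 (forall k j, 0 <= q k j) -> (forall k j, 0 <= q' k j) ->
 (forall j, q_Rj Rc q' j <= q_Rj Rc' q j) ->
 Pi c w p Rc S q' i <= Pi c w p Rc' S' q i.
Proof.
move=> canti cw wanti SS' qe q0 q'0 hR.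
have qiM : q_iM q i = q_iM q' i by apply: eq_bigr => j _; rewrite qe.
rewrite /Pi qiM -!addrA -!opprD !cost_split.
apply: lerB => //; apply: ler_sum => j _; rewrite qe.
apply: ler_wpM2r => //.
have y0 : forall k, 0 <= q_Rj Rc q' k by move=> k; apply: sumr_ge0.
have Y0 : forall k, 0 <= q_Rj Rc' q k by move=> k; apply: sumr_ge0.
have xX : q_RS Rc S q' <= q_RS Rc' S' q.
  apply: le_trans (_ : \sum_(k in S) q_Rj Rc' q k <= _).
    by apply: ler_sum => k _.
  by apply: sum_subset_le.
have YX : forall k, k \in S' -> q_Rj Rc' q k <= q_RS Rc' S' q.
  move=> k kS; have -> : q_Rj Rc' q k = \sum_(l in [set k]) q_Rj Rc' q l by rewrite big_set1.
  by apply: sum_subset_le => //; rewrite finset.sub1set.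
case: (boolP (j \in S)) => jS.
  rewrite (fintype.subsetP SS' _ jS).
  apply: (@cS_mono _ _ c S S' _ _ canti SS' _ xX j jS); by apply: sumr_ge0 => k _.
case: (boolP (j \in S')) => jS'; last by apply: wanti.
apply: le_trans (@cS_le_j _ _ c S' _ j jS') _.
apply: le_trans (_ : c j (q_Rj Rc q' j) <= _); last exact/ltW/cw.
apply: canti => //; apply: le_trans (YX _ jS'); exact: hR.
Qed.

Lemma Pi_cost (R : realType) (I J : finType) (c w : J -> R -> R) (p : I -> R -> R)
  (Rc : {set I}) (S : {set J}) (q : I -> J -> R) (i : I) :
  Pi c w p Rc S q i = p i (q_iM q i) * q_iM q i -
   \sum_j (if j \in S then c_S c S (q_RS Rc S q) else w j (q_Rj Rc q j)) * q i j.
Proof. by rewrite /Pi -addrA -opprD cost_split. Qed.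

Lemma Pi_zero (R : realType) (I J : finType) (c w : J -> R -> R) (p : I -> R -> R)
  (Rc : {set I}) (S : {set J}) (q : I -> J -> R) (i : I) :
  (forall j, q i j = 0) -> Pi c w p Rc S q i = 0.
Proof.
move=> h; rewrite Pi_cost.
have -> : q_iM q i = 0 by rewrite /q_iM big1.
by rewrite mulr0 big1 ?subrr // => j _; rewrite h mulr0.
Qed.

Lemma feas_ge0 (R : realType) (I J : finType) (qstar : I -> R) (qbar : I -> J -> R)
  (Rc : {set I}) (q : I -> J -> R) :
  feasible qstar qbar Rc q -> forall i j, 0 <= q i j.
Proof.
case=> h1 h2 i j; case: (boolP (i \in Rc)) => iR; first by case: (h2 i iR) => _ /(_ j) [].
by rewrite h1.
Qed.

Lemma obj_ub (R : realType) (I J : finType) (c w : J -> R -> R) (p : I -> R -> R)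
  (qstar : I -> R) (qbar : I -> J -> R) (Rc : {set I}) (S : {set J}) (q : I -> J -> R) :
  (forall j x, 0 <= x -> 0 < c j x) ->
  (forall j x, 0 <= x -> 0 < w j x) ->
  (forall i x y, 0 <= x -> x <= y -> p i y <= p i x) ->
  feasible qstar qbar Rc q ->
  objective c w p Rc S q <= \sum_(i in Rc) `|p i 0| * qstar i.
Proof.
move=> c0 w0 panti fq.
have q0 := @feas_ge0 _ _ _ _ _ _ _ fq.
apply: ler_sum => i iR; rewrite Pi_cost.
have x0 : 0 <= q_iM q i by apply: sumr_ge0.
have xs : q_iM q i <= qstar i by case: fq => _ /(_ i iR) [].
apply: le_trans (_ : p i (q_iM q i) * q_iM q i <= _).
  rewrite gerBl; apply: sumr_ge0 => j _; apply: mulr_ge0 => //.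
  case: ifP => _; last by apply/ltW/w0/sumr_ge0.
  by apply: cS_ge0 => k; apply/ltW/c0; apply: sumr_ge0 => l _; apply: sumr_ge0.
apply: le_trans (_ : `|p i 0| * q_iM q i <= _); last exact: ler_wpM2l.
apply: ler_wpM2r => //; apply: le_trans (panti _ _ _ (lexx 0) x0) _.
exact: ler_norm.
Qed.

Definition Eset (R : realType) (I J : finType) (c w : J -> R -> R) (p : I -> R -> R)
  (qstar : I -> R) (qbar : I -> J -> R) (Rc : {set I}) (S : {set J}) : set R :=
  [set x | exists q, feasible qstar qbar Rc q /\ x = objective c w p Rc S q].

Lemma zero_feas (R : realType) (I J : finType) (qstar : I -> R) (qbar : I -> J -> R)
  (Rc : {set I}) :
  (forall i, 0 < qstar i) -> (forall i j, 0 < qbar i j) ->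
  feasible qstar qbar Rc (fun _ _ => 0).
Proof.
move=> hs hb; split=> // i iR; split; last by move=> j; split => //; exact/ltW.
by rewrite /q_iM big1 // ltW.
Qed.

Local Open Scope classical_set_scope.

Section V.
Context (R : realType) (I J : finType) (c w : J -> R -> R) (p : I -> R -> R)
  (qstar : I -> R) (qbar : I -> J -> R)
  (c0 : forall j x, 0 <= x -> 0 < c j x)
  (w0 : forall j x, 0 <= x -> 0 < w j x)
  (panti : forall i x y, 0 <= x -> x <= y -> p i y <= p i x)
  (qs : forall i, 0 < qstar i) (qb : forall i j, 0 < qbar i j).

Let E := Eset c w p qstar qbar.
Let v := mrs_value c w p qstar qbar.

Lemma E0 Rc S : E Rc S 0.
Proof.
exists (fun _ _ => 0); split; first exact: zero_feas.
by rewrite /objective big1 // => i _; rewrite Pi_zero.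
Qed.

Lemma E_ub Rc S : has_ubound (E Rc S).
Proof.
exists (\sum_(i in Rc) `|p i 0| * qstar i) => y [q [fq ->]].
exact: (obj_ub S c0 w0 panti fq).
Qed.

Lemma vE Rc S : Rc != finset.set0 -> v Rc S = sup (E Rc S).
Proof. by move=> hR; rewrite /v /mrs_value (negbTE hR). Qed.

Lemma v_ge Rc S x : Rc != finset.set0 -> E Rc S x -> x <= v Rc S.
Proof. by move=> hR Ex; rewrite vE //; apply: ub_le_sup => //; exact: E_ub. Qed.

Lemma v_le Rc S b : Rc != finset.set0 -> ubound (E Rc S) b -> v Rc S <= b.
Proof. by move=> hR ub; rewrite vE //; apply: ge_sup => //; exists 0; exact: E0. Qed.

Lemma v_ge0 Rc S : 0 <= v Rc S.
Proof.
case: (boolP (Rc == finset.set0)) => hR; first by rewrite /v /mrs_value hR.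
by apply: v_ge => //; exact: E0.
Qed.

End V.

Lemma sum_disjU (R : realType) (T : finType) (A B : {set T}) (f : T -> R) :
  A :&: B = finset.set0 ->
  \sum_(i in A :|: B) f i = \sum_(i in A) f i + \sum_(i in B) f i.
Proof.
move=> dis; rewrite (big_setID A) /= (finset.setIidPr (finset.subsetUl A B)).
congr (_ + _); apply: eq_bigl => x; rewrite !inE.
case: (boolP (x \in A)) => xA /=; rewrite ?andbF ?andbT ?orbT // ?orbF.
apply/esym/negP => xB.
have : x \in A :&: B by rewrite inE xA xB.
by rewrite dis inE.
Qed.

Section Main.
Context (R : realType) (I J : finType) (c w : J -> R -> R) (p : I -> R -> R)
  (qstar : I -> R) (qbar : I -> J -> R)
  (canti : forall j x y, 0 <= x -> x <= y -> c j y <= c j x)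
  (cw : forall j x, 0 <= x -> c j x < w j x)
  (wanti : forall j x y, 0 <= x -> x <= y -> w j y <= w j x)
  (qs : forall i, 0 < qstar i) (qb : forall i j, 0 < qbar i j).

Lemma mono_step (Rc F : {set I}) (S T : {set J}) q :
  Rc \subset F -> S \subset T -> feasible qstar qbar Rc q ->
  feasible qstar qbar F q /\ objective c w p Rc S q <= objective c w p F T q.
Proof.
move=> RF ST fq; have q0 := feas_ge0 fq; case: fq => h1 h2; split.
  split=> [i j iF|i iF]; first by apply: h1; exact: (contra (fintype.subsetP RF i) iF).
  case: (boolP (i \in Rc)) => iR; first exact: h2.
  split; first by rewrite /q_iM big1 ?ltW // => j _; rewrite h1.
  by move=> j; rewrite h1 // lexx ltW.
rewrite /objective [X in _ <= X](big_setID Rc) /= (finset.setIidPr RF).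
rewrite [X in _ <= _ + X]big1 ?addr0; last first.
  by move=> i; rewrite !inE => /andP[iR _]; apply: Pi_zero => j; rewrite h1.
apply: ler_sum => i iR; apply: Pi_mono => //.
move=> j; apply: sum_subset_le => // k _; exact: q0.
Qed.

Lemma sup_step (Rc F : {set I}) (S T : {set J}) q1 q2 :
  Rc :&: F = finset.set0 -> feasible qstar qbar Rc q1 -> feasible qstar qbar F q2 ->
  let q := fun i j => q1 i j + q2 i j in
  feasible qstar qbar (Rc :|: F) q /\
  objective c w p Rc S q1 + objective c w p F T q2 <=
  objective c w p (Rc :|: F) (S :|: T) q.
Proof.
move=> dis f1 f2 q.
have q10 := feas_ge0 f1; have q20 := feas_ge0 f2.
have q0 : forall i j, 0 <= q i j by move=> i j; apply: addr_ge0.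
have nRF : forall i, i \in Rc -> i \notin F.
  move=> i iR; apply/negP => iF.
  have : i \in Rc :&: F by rewrite inE iR iF.
  by rewrite dis inE.
have nFR : forall i, i \in F -> i \notin Rc.
  by move=> i iF; apply/negP => iR; move: (nRF i iR); rewrite iF.
case: f1 => h11 h12; case: f2 => h21 h22.
have e1 : forall i, i \in Rc -> forall j, q i j = q1 i j.
  by move=> i iR j; rewrite /q (h21 _ _ (nRF _ iR)) addr0.
have e2 : forall i, i \in F -> forall j, q i j = q2 i j.
  by move=> i iF j; rewrite /q (h11 _ _ (nFR _ iF)) add0r.
split.
  split=> [i j|i].
    rewrite inE negb_or => /andP[iR iF]; by rewrite /q h11 // h21 // addr0.
  rewrite inE => /orP[iR|iF].
    have -> : q_iM q i = q_iM q1 i by apply: eq_bigr => j _; rewrite e1.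
    by split; [case: (h12 i iR)|move=> j; rewrite e1 //; case: (h12 i iR) => _ /(_ j)].
  have -> : q_iM q i = q_iM q2 i by apply: eq_bigr => j _; rewrite e2.
  by split; [case: (h22 i iF)|move=> j; rewrite e2 //; case: (h22 i iF) => _ /(_ j)].
rewrite /objective sum_disjU //; apply: lerD.
  apply: ler_sum => i iR; apply: Pi_mono => //; first exact: finset.subsetUl.
    exact: e1.
  move=> j; apply: le_trans (_ : q_Rj Rc q j <= _).
    by apply: ler_sum => k _; rewrite /q lerDl.
  by apply: sum_subset_le; [exact: finset.subsetUl|move=> k _; exact: q0].
apply: ler_sum => i iF; apply: Pi_mono => //; first exact: finset.subsetUr.
  exact: e2.
move=> j; apply: le_trans (_ : q_Rj F q j <= _).
  by apply: ler_sum => k _; rewrite /q lerDr.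
by apply: sum_subset_le; [exact: finset.subsetUr|move=> k _; exact: q0].
Qed.

End Main.

Lemma cont0 (R : realType) (f : R -> R) :
  {within @nonneg_reals R, continuous f} -> forall e : R, 0 < e ->
  exists d : R, 0 < d /\ forall y, 0 <= y -> y < d -> `|f 0 - f y| < e.
Proof.
move=> hf e e0.
have := hf 0.
move/cvgrPdist_lt => /(_ e e0) H.
have H2 : within (@nonneg_reals R) (nbhs (0:R)) (fun t => `|f 0 - f t| < e).
  rewrite nbhs_subspace_in //; last by rewrite /nonneg_reals /=.
move: H2; rewrite /within /=. 
case/nbhs_ballP => d /= d0 H3. exists d; split => // y y0 yd.
apply: H3 => //. rewrite /ball /= sub0r normrN ger0_norm //.
Qed.

Lemma pos_witness (R : realType) (I J : finType) (c w : J -> R -> R) (p : I -> R -> R)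
  (qstar : I -> R) (qbar : I -> J -> R)
  (canti : forall j x y, 0 <= x -> x <= y -> c j y <= c j x)
  (cw : forall j x, 0 <= x -> c j x < w j x)
  (wanti : forall j x y, 0 <= x -> x <= y -> w j y <= w j x)
  (qs : forall i, 0 < qstar i) (qb : forall i j, 0 < qbar i j)
  (Rc : {set I}) (S : {set J}) (i0 : I) (j0 : J) :
  i0 \in Rc -> {within @nonneg_reals R, continuous (p i0)} -> w j0 0 < p i0 0 ->
  exists q, feasible qstar qbar Rc q /\ 0 < objective c w p Rc S q.
Proof.
move=> i0R pc pw.
have pw0 : 0 < p i0 0 - w j0 0 by rewrite subr_gt0.
have [d [d0 hd]] := cont0 pc pw0.
pose eps := Num.min (d / 2) (Num.min (qstar i0) (qbar i0 j0)).
have eps0 : 0 < eps by rewrite !lt_min divr_gt0 ?qs ?qb.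
have epsd : eps < d.
  rewrite /eps; apply: le_lt_trans (_ : _ <= d / 2) _; first by rewrite ge_min lexx.
  by rewrite ltr_pdivrMr // ltr_pMr // ltr1n.
have peps : w j0 0 < p i0 eps.
  have := hd eps (ltW eps0) epsd; rewrite ltr_norml => /andP[_].
  by rewrite ltrBlDr -ltrBlDl opprB addrC subrK.
pose q := fun i j => if (i == i0) && (j == j0) then eps else 0.
have q0 : forall i j, 0 <= q i j by move=> i j; rewrite /q; case: ifP => // _; exact: ltW.
have qz : forall i, i != i0 -> forall j, q i j = 0.
  by move=> i /negbTE ne j; rewrite /q ne.
have qiM : q_iM q i0 = eps.
  rewrite /q_iM (bigD1 j0) //= big1 ?addr0; first by rewrite /q !eqxx.
  by move=> j /negbTE ne; rewrite /q ne andbF.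
exists q; split.
  split=> [i j iR|i iR].
    by apply: qz; apply: contraNneq iR => ->.
  case: (eqVneq i i0) => [->|ne].
    rewrite qiM; split; first by rewrite /eps !ge_min lexx !orbT.
    move=> j; split => //; rewrite /q; case: ifP => [/andP[_ /eqP->]|_].
      by rewrite /eps !ge_min lexx !orbT.
    exact: ltW.
  split; first by rewrite /q_iM big1 ?ltW // => j _; rewrite qz.
  by move=> j; rewrite qz // lexx ltW.
rewrite /objective (bigD1 i0) //= big1 ?addr0; last first.
  by move=> i /andP[_ ne]; apply: Pi_zero => j; rewrite qz.
rewrite Pi_cost qiM (bigD1 j0) //= big1 ?addr0; last first.
  by move=> j /negbTE ne; rewrite /q ne andbF mulr0.
rewrite {3}/q !eqxx /= -mulrBl mulr_gt0 // subr_gt0.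
apply: le_lt_trans peps.
have X0 : 0 <= q_RS Rc S q by apply: sumr_ge0 => j _; apply: sumr_ge0.
have Y0 : 0 <= q_Rj Rc q j0 by apply: sumr_ge0.
case: ifP => jS; last by apply: wanti.
apply: le_trans (@cS_le_j _ _ c S _ j0 jS) _.
apply: le_trans (_ : w j0 (q_RS Rc S q) <= _); last exact: wanti.
exact/ltW/cw.
Qed.

Theorem proposition1 (R : realType) (I J : finType)
  (c w : J -> R -> R) (p : I -> R -> R) (qstar : I -> R) (qbar : I -> J -> R) :
  (0 < #|J|)%N ->
  MRS_situation c w p qstar qbar ->
  let v := mrs_value c w p qstar qbar in
  [/\ (forall (Rc : {set I}) (S : {set J}), Rc != finset.set0 -> 0 < v Rc S),
      (forall (Rc F : {set I}) (S T : {set J}),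
          Rc :&: F = finset.set0 -> S :&: T = finset.set0 ->
          v Rc S + v F T <= v (Rc :|: F) (S :|: T)) &
      (forall (Rc F : {set I}) (S T : {set J}),
          Rc \subset F -> S \subset T -> v Rc S <= v F T)].
Proof.
move=> hJ [c0 [cdec [ccont [cmon [w0 [wanti [wcont [cw [wmon [panti [pcont [pw qsb]]]]]]]]]]]] v.
have qs : forall i, 0 < qstar i by move=> i; case: (qsb.1 i).
have qb := qsb.2.
have canti : forall j x y, 0 <= x -> x <= y -> c j y <= c j x.
  move=> j x y x0; rewrite le_eqVlt => /orP[/eqP->|xy] //; exact/ltW/cdec.
have [j0 _] := card_gt0P hJ.
have vge0 := v_ge0 c0 w0 panti qs qb.
have monov : forall (Rc F : {set I}) (S T : {set J}),
          Rc \subset F -> S \subset T -> v Rc S <= v F T.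
  move=> Rc F S T RF ST.
  case: (boolP (Rc == finset.set0)) => hR; first by rewrite /v /mrs_value hR vge0.
  have hF : F != finset.set0.
    apply: contraNneq hR => F0; rewrite -finset.subset0 -F0 //.
  apply: (v_le qs qb hR) => y [q [fq ->]].
  have [fF le] := mono_step p canti cw wanti qs qb RF ST fq.
  apply: le_trans le (v_ge c0 w0 panti hF _); by exists q.
split=> //.
  move=> Rc S hR; have /finset.set0Pn [i0 i0R] := hR.
  have [q [fq pos]] := pos_witness canti cw wanti qs qb S i0R (pcont i0) (pw i0 j0).
  apply: lt_le_trans pos (v_ge c0 w0 panti hR _); by exists q.
move=> Rc F S T dRF dST.
case: (boolP (Rc == finset.set0)) => hR.
  rewrite {1}/v /mrs_value hR add0r (eqP hR) finset.set0U.
  by apply: monov => //; exact: finset.subsetUr.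
case: (boolP (F == finset.set0)) => hF.
  rewrite {2}/v /mrs_value hF addr0 (eqP hF) finset.setU0.
  by apply: monov => //; exact: finset.subsetUl.
have hRF : Rc :|: F != finset.set0.
  apply: contraNneq hR => e; rewrite -finset.subset0 -e; exact: finset.subsetUl.
have key : forall x y, Eset c w p qstar qbar Rc S x -> Eset c w p qstar qbar F T y ->
   x + y <= v (Rc :|: F) (S :|: T).
  move=> x y [q1 [f1 ->]] [q2 [f2 ->]].
  have [f le] := sup_step p canti cw wanti S T dRF f1 f2.
  apply: le_trans le (v_ge c0 w0 panti hRF _); by eexists; split; first exact: f.
rewrite -lerBrDr; apply: (v_le qs qb hR) => x Ex.
rewrite lerBrDl -lerBrDr; apply: (v_le qs qb hF) => y Ey.
rewrite lerBrDl; exact: key.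
Qed.
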